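(* Let $G$ be a finite group with identity $e$, and let $\mathcal{B}\subseteq\binom{G}{3}$ be the set of bases of a rank-$3$ matroid on the ground set $G$ that is invariant under left multiplication by $G$. Let $g,h,g',h'\in G$ with $e,g,h$ pairwise distinct and $e,g',h'$ pairwise distinct. If $f_{g,h}\cup f_{g',h'}\subseteq\mathcal{B}$, then $f_{g,g'}\subseteq\mathcal{B}$ or $f_{g,h'}\subseteq\mathcal{B}$, where only those of $f_{g,g'}$, $f_{g,h'}$ that are defined (i.e. $g'\ne g$, resp. $h'\neq g$) are considered; at least one of them is defined and contained in $\mathcal{B}$.
   Context: $G$ acts on $\binom{G}{3}$ by $x\cdot\{a,b,c\}=\{xa,xb,xc\}$. For $g,h\in G$ with $e,g,h$ pairwise distinct, $f_{g,h}=\{\{a,ag,ah\}\mid a\in G\}$ (a $G$-orbit, with $f_{g,h}=f_{h,g}$). A matroid on ground set $G$ is invariant if its set of bases is preserved by this action. *)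

(* Defs.v *)
From mathcomp Require Import all_boot all_fingroup.
Set Implicit Arguments. Unset Strict Implicit. Unset Printing Implicit Defensive.
Local Open Scope group_scope.

Definition is_matroid_bases (T : finType) (B : {set {set T}}) : Prop :=
  B != set0 /\
  forall B1 B2, B1 \in B -> B2 \in B -> forall x, x \in B1 :\: B2 ->
    exists2 y, y \in B2 :\: B1 & (B1 :\ x) :|: [set y] \in B.

Definition is_rank3_matroid_bases (T : finType) (B : {set {set T}}) : Prop :=
  is_matroid_bases B /\ forall b, b \in B -> #|b| = 3.

Definition left_invariant (gT : finGroupType) (B : {set {set gT}}) : Prop :=
  forall (x : gT) (b : {set gT}), b \in B -> [set x * y | y in b] \in B.

Definition forb (gT : finGroupType) (g h : gT) : {set {set gT}} :=
  [set [set a; a * g; a * h] | a : gT].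

(* Main.v *)
Require Import Defs.
From mathcomp Require Import all_boot all_fingroup.
Local Open Scope group_scope.

Lemma forb_sub (gT : finGroupType) (B : {set {set gT}}) (g h : gT) :
  left_invariant B -> [set 1; g; h] \in B -> forb g h \subset B.
Proof.
move=> inv H; apply/subsetP => b /imsetP [a _ ->].
have := inv a _ H.
suff -> : [set a * y | y in [set 1; g; h]] = [set a; a * g; a * h] by [].
apply/setP => z; rewrite !inE; apply/imsetP/idP.
  move=> [y yin ->]; move: yin; rewrite !inE.
  by case/orP => [/orP []|] /eqP ->; rewrite ?mulg1 eqxx ?orbT.
case/orP => [/orP []|] /eqP ->.
- by exists 1; rewrite ?mulg1 // !inE eqxx.
- by exists g; rewrite // !inE eqxx ?orbT.
- by exists h; rewrite // !inE eqxx ?orbT.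
Qed.

Lemma forb_in (gT : finGroupType) (B : {set {set gT}}) (g h : gT) :
  forb g h \subset B -> [set 1; g; h] \in B.
Proof.
move=> /subsetP; apply; apply/imsetP; exists 1 => //.
by rewrite !mul1g.
Qed.

Theorem mainTheorem8 (gT : finGroupType) (B : {set {set gT}})
  (g h g' h' : gT) :
  is_rank3_matroid_bases B -> left_invariant B ->
  g != 1 -> h != 1 -> g != h ->
  g' != 1 -> h' != 1 -> g' != h' ->
  forb g h :|: forb g' h' \subset B ->
  (g' != g /\ forb g g' \subset B) \/ (h' != g /\ forb g h' \subset B).
Proof.
move=> [[_ ex] _] inv g1 h1 gh g'1 h'1 g'h' /subsetP sub.
have B1 : [set 1; g; h] \in B.
  by apply: forb_in; apply/subsetP => b hb; apply: sub; rewrite inE hb.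
have B2 : [set 1; g'; h'] \in B.
  by apply: forb_in; apply/subsetP => b hb; apply: sub; rewrite inE hb orbT.
have [hg'|hg'] := eqVneq h g'.
  by left; subst g'; split; [rewrite eq_sym | apply: forb_sub].
have [hh'|hh'] := eqVneq h h'.
  by right; subst h'; split; [rewrite eq_sym | apply: forb_sub].
have hx : h \in [set 1; g; h] :\: [set 1; g'; h'].
  by rewrite !inE eqxx !orbT (negbTE h1) (negbTE hg') (negbTE hh').
have [y] := ex _ _ B1 B2 h hx.
rewrite !inE => /andP [yn yin] HB.
have y1 : y != 1 by apply: contra yn => ->.
have yg : y != g by apply: contra yn => ->; rewrite orbT.
have yh : y != h by apply: contra yn => ->; rewrite orbT.
have E : [set 1; g; h] :\ h :|: [set y] = [set 1; g; y].
  apply/setP => z; rewrite !inE.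
  have [->|zh] := eqVneq z h; last by rewrite /= orbF.
  by rewrite (negbTE h1) eq_sym (negbTE gh) /= eq_sym (negbTE yh).
rewrite E in HB.
move: yin => /orP [/orP []|] /eqP yE.
- by rewrite yE eqxx in y1.
- by left; subst y; split; [exact: yg | apply: forb_sub].
- by right; subst y; split; [exact: yg | apply: forb_sub].
Qed.
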